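(* Let $\mathcal{H}$ be a finite $k$-uniform hypergraph such that: (i) $\mathcal{H}$ has a vertex $z$ of degree $2$; (ii) $\delta(\mathcal{H} \setminus \{z\}) \geq 3$ and $d_{\mathcal H}(u) \geq 4$ for every $u \in V(\mathcal{H}) \setminus \{z\}$; (iv) for every two edges $e, e' \in E(\mathcal{H})$, every monomorphism $\phi : V(\mathcal{H} \setminus \{e, e'\}) \to V(\mathcal{H})$ is the identity. Then for every edge $e \in E(\mathcal{H})$, every monomorphism $\phi : V(\mathcal{H} \setminus \{e\}) \to V(\mathcal{H})$ is the identity.
   Context: $d_{\mathcal H}(x)$ is the number of edges containing $x$; $\delta$ is minimum degree. $\mathcal{H}\setminus\{z\}$ for a vertex $z$ is obtained by deleting $z$ and all edges containing it. For a set $S$ of edges, $\mathcal{H}\setminus S$ is the hypergraph with edge set $E(\mathcal H)\setminus S$, and $V(\mathcal{H}\setminus S)$ denotes the union of its edges. A monomorphism $\phi: V(\mathcal{F}')\to V(\mathcal{F})$ (for $\mathcal F'\subseteq \mathcal F$) is an injective map such that $\{\phi(a): a\in x\}$ is an edge of $\mathcal F$ for every edge $x$ of $\mathcal F'$; ''identity'' means $\phi(a)=a$ for all $a$ in the domain. *)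

(* Defs.v *)
From mathcomp Require Import all_boot.
Set Implicit Arguments. Unset Strict Implicit. Unset Printing Implicit Defensive.

(* A finite hypergraph on vertex type T: vertex set V and edge set E,
   every edge being a subset of V. *)

Definition hdeg (T : finType) (E : {set {set T}}) (x : T) : nat :=
  #|[set e in E | x \in e]|.

(* edge set of H \ {z} : delete z and all edges containing it *)
Definition del_vertex_edges (T : finType) (E : {set {set T}}) (z : T)
  : {set {set T}} := [set e in E | z \notin e].

(* V(H \ S) : the union of the edges of H \ S *)
Definition vset_del (T : finType) (E S : {set {set T}}) : {set T} :=
  cover (E :\: S).

Definition is_mono (T : finType) (V : {set T}) (E S : {set {set T}})
  (phi : T -> T) : Prop :=
  [/\ {in vset_del E S &, injective phi},
      {in vset_del E S, forall a, phi a \in V} &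
      forall x, x \in E :\: S -> phi @: x \in E].

Definition is_identity_on (T : finType) (E S : {set {set T}}) (phi : T -> T)
  : Prop := {in vset_del E S, forall a, phi a = a}.

(* Main.v *)
Require Import Defs.
From mathcomp Require Import all_boot.

Lemma card_le2 (T : finType) (A : {set T}) (a b : T) :
  A \subset [set a; b] -> #|A| <= 2.
Proof.
move=> s; apply: (leq_trans (subset_leq_card s)).
by rewrite cards2; case: (a != b).
Qed.

Theorem lemma3p2 (T : finType) (k : nat) (V : {set T}) (E : {set {set T}})
  (z : T)
  (HEV : forall e, e \in E -> e \subset V)
  (Hunif : forall e, e \in E -> #|e| = k)
  (Hz : z \in V)
  (Hdz : hdeg E z = 2)
  (Hmin : forall u, u \in V :\ z -> 3 <= hdeg (del_vertex_edges E z) u)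
  (Hdeg : forall u, u \in V :\ z -> 4 <= hdeg E u)
  (Hrig2 : forall e e', e \in E -> e' \in E -> e != e' ->
     forall phi : T -> T, is_mono V E [set e; e'] phi ->
       is_identity_on E [set e; e'] phi) :
  forall e, e \in E ->
    forall phi : T -> T, is_mono V E [set e] phi -> is_identity_on E [set e] phi.
Proof.
move=> e eE phi [Hinj Hval Hed].
have [u uV] : exists u, u \in V :\ z.
  apply/existsP; apply: contraT; rewrite negb_exists => /forallP Hn.
  have : hdeg E z <= 1; last by rewrite Hdz.
  rewrite /hdeg; apply: (leq_trans (subset_leq_card (B := [set [set z]]) _)).
    2: by rewrite cards1.
  apply/subsetP => f; rewrite !inE => /andP [fE zf]; apply/eqP.
  apply/setP => x; rewrite inE; apply/idP/idP; last by move/eqP ->.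
  move=> xf; have := Hn x; rewrite !inE (subsetP (HEV _ fE) _ xf) andbT.
  by rewrite negbK.
have [e' [e'E e'z nee']] : exists e', [/\ e' \in E, z \notin e' & e != e'].
  have := Hmin _ uV; rewrite /hdeg => H3.
  have : ~~ ([set f in del_vertex_edges E z | u \in f] \subset [set e; e]).
    by apply/negP => /card_le2; rewrite leqNgt H3.
  case/subsetPn => f; rewrite !inE => /andP [/andP [fE zf] _] /norP [nf _].
  by exists f; split => //; rewrite eq_sym.
have Hid := Hrig2 _ _ eE e'E nee' phi.
have Hmono : is_mono V E [set e; e'] phi.
  have sub : vset_del E [set e; e'] \subset vset_del E [set e].
    apply/subsetP => x /bigcupP [f]; rewrite !inE => /andP [/norP [f1 f2] fE] xf.
    by apply/bigcupP; exists f => //; rewrite !inE f1 fE.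
  split.
  - by move=> x y /(subsetP sub) xin /(subsetP sub) yin; apply: Hinj.
  - by move=> x /(subsetP sub); apply: Hval.
  - move=> x; rewrite !inE => /andP [/norP [x1 x2] xE]; apply: Hed.
    by rewrite !inE x1 xE.
move: (Hid Hmono) => {}Hid.
move=> a /bigcupP [f]; rewrite !inE => /andP [fne fE] af.
apply: Hid.
case: (f =P e') => [fe'|nfe']; last first.
  by apply/bigcupP; exists f => //; rewrite !inE fE andbT; apply/norP; split => //; apply/eqP.
subst f.
have aV : a \in V :\ z.
  rewrite !inE (subsetP (HEV _ e'E) _ af) andbT.
  by apply: contraNneq e'z => <-.
have H4 := Hdeg _ aV.
have : ~~ ([set g in E | a \in g] \subset [set e; e']).
  by apply/negP => /card_le2; rewrite /hdeg in H4; rewrite leqNgt (ltnW H4).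
case/subsetPn => g; rewrite !inE => /andP [gE ag] gn.
by apply/bigcupP; exists g => //; rewrite !inE gn gE.
Qed.
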